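(* Let $\mathcal{A}$ be a finite list of elements of a finitely generated abelian group $\Gamma$ and let $G$ be a finite abelian group. Then $\#\mathcal{M}(\mathcal{A};\Gamma,G)=\chi^G_{\mathcal{A}}(\#G)$.
   Context: $\mathcal{M}(\mathcal{A};\Gamma,G)=\mathrm{Hom}(\Gamma,G)\smallsetminus\bigcup_{\alpha\in\mathcal{A}}\{\varphi\mid\varphi(\alpha)=0\}$. $r_\Gamma$ is the rank of $\Gamma$, $r_{\mathcal{S}}$ the rank of $\langle\mathcal{S}\rangle$, $m(\mathcal{S};G)=\#\mathrm{Hom}((\Gamma/\langle\mathcal{S}\rangle)_{\mathrm{tor}},G)$ and $\chi^G_{\mathcal{A}}(t)=\sum_{\mathcal{S}\subset\mathcal{A}}(-1)^{\#\mathcal{S}}m(\mathcal{S};G)t^{r_\Gamma-r_{\mathcal{S}}}$ (sublists distinguished by index). *)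

(* Defs.v *)
From HB Require Import structures.
From mathcomp Require Import all_boot all_order all_algebra.
From Stdlib Require Import ClassicalEpsilon.
Set Implicit Arguments. Unset Strict Implicit. Unset Printing Implicit Defensive.
Import Order.TTheory GRing.Theory Num.Theory.
Local Open Scope ring_scope.

Definition has_card (T : Type) (P : T -> Prop) (n : nat) : Prop :=
  exists f : 'I_n -> T, injective f /\ forall x, P x <-> exists i, f i = x.

(* #P : the number of elements of P (meaningful when P is finite). *)
Definition pcard (T : Type) (P : T -> Prop) : nat :=
  epsilon (inhabits 0%N) (fun n => has_card P n).

Definition is_hom (Gam G : zmodType) (phi : Gam -> G) : Prop :=
  forall x y, phi (x - y) = phi x - phi y.

Definition in_span (Gam : zmodType) (s : seq Gam) (x : Gam) : Prop :=
  exists c : 'I_(size s) -> int, x = \sum_(i < size s) s`_i *~ c i.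

Definition fin_gen (Gam : zmodType) : Prop :=
  exists s : seq Gam, forall x, in_span s x.

Definition in_gen (Gam : zmodType) (A : seq Gam) (S : {set 'I_(size A)}) (x : Gam) : Prop :=
  exists c : 'I_(size A) -> int, x = \sum_(i in S) A`_i *~ c i.

Definition zindep (Gam : zmodType) (n : nat) (v : 'I_n -> Gam) : Prop :=
  forall c : 'I_n -> int, \sum_(i < n) v i *~ c i = 0 -> forall i, c i = 0.

Definition is_rank (Gam : zmodType) (H : Gam -> Prop) (r : nat) : Prop :=
  (exists v : 'I_r -> Gam, (forall i, H (v i)) /\ zindep v) /\
  (forall v : 'I_r.+1 -> Gam, (forall i, H (v i)) -> ~ zindep v).

Definition zrank (Gam : zmodType) (H : Gam -> Prop) : nat :=
  epsilon (inhabits 0%N) (fun r => is_rank H r).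

Definition rankG (Gam : zmodType) : nat := zrank (fun _ : Gam => True).
Definition rankS (Gam : zmodType) (A : seq Gam) (S : {set 'I_(size A)}) : nat :=
  zrank (in_gen S).

Definition Mset (Gam : zmodType) (A : seq Gam) (G : zmodType) (phi : Gam -> G) : Prop :=
  is_hom phi /\ forall a, a \in A -> phi a != 0.

Definition tor_mod (Gam : zmodType) (A : seq Gam) (S : {set 'I_(size A)}) (x : Gam) : Prop :=
  exists n : nat, (0 < n)%N /\ in_gen S (x *+ n).

(* Hom((Gamma/<S>)_tor, G), represented by the functions psi : Gamma -> G that
   are additive on the preimage T_S of (Gamma/<S>)_tor, vanish on <S>, and are
   0 outside T_S (canonical representative). *)
Definition hom_tor (Gam : zmodType) (A : seq Gam) (S : {set 'I_(size A)})
    (G : zmodType) (psi : Gam -> G) : Prop :=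
  (forall x y, tor_mod S x -> tor_mod S y -> psi (x - y) = psi x - psi y) /\
  (forall x, in_gen S x -> psi x = 0) /\
  (forall x, ~ tor_mod S x -> psi x = 0).

Definition mSG (Gam : zmodType) (A : seq Gam) (S : {set 'I_(size A)}) (G : zmodType) : nat :=
  pcard (@hom_tor Gam A S G).

Definition chiA (Gam : zmodType) (A : seq Gam) (G : zmodType) (t : int) : int :=
  \sum_(S : {set 'I_(size A)})
     (-1) ^+ #|S| * (mSG S G)%:Z * t ^+ (rankG Gam - rankS S)%N.

(* Main.v *)
Require Import Defs.
From HB Require Import structures.
From mathcomp Require Import all_boot all_order all_algebra zify.
From Stdlib Require Import ClassicalEpsilon FunctionalExtensionality.
Import Order.TTheory GRing.Theory Num.Theory.
Local Open Scope ring_scope.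
Set Implicit Arguments. Unset Strict Implicit. Unset Printing Implicit Defensive.

Section Hom.
Variables (Gam G : zmodType) (phi : Gam -> G) (hphi : is_hom phi).
Lemma hom0 : phi 0 = 0.
Proof. by move: (hphi 0 0); rewrite !subrr. Qed.
Lemma homN x : phi (- x) = - phi x.
Proof. by move: (hphi 0 x); rewrite !sub0r hom0 sub0r. Qed.
Lemma homD x y : phi (x + y) = phi x + phi y.
Proof. by have := hphi x (- y); rewrite opprK => ->; rewrite homN opprK. Qed.
Lemma homMn x n : phi (x *+ n) = phi x *+ n.
Proof.
elim: n => [|n IH]; first by rewrite !mulr0n hom0.
by rewrite !mulrS homD IH.
Qed.
Lemma homMz x c : phi (x *~ c) = phi x *~ c.
Proof.
case: c => n; first by rewrite -!pmulrn homMn.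
by rewrite NegzE !mulrNz homN -!pmulrn homMn.
Qed.
Lemma hom_sum I r (P : pred I) (F : I -> Gam) :
  phi (\sum_(i <- r | P i) F i) = \sum_(i <- r | P i) phi (F i).
Proof. exact: (big_morph phi homD hom0). Qed.
End Hom.

Lemma is_hom_sub (Gam G : zmodType) (f g : Gam -> G) :
  is_hom f -> is_hom g -> is_hom (fun x => f x - g x).
Proof.
move=> hf hg x y /=; rewrite (hf x y) (hg x y).
by rewrite !opprB addrACA [in RHS]addrACA [- g x + _]addrC.
Qed.
Lemma is_hom_add (Gam G : zmodType) (f g : Gam -> G) :
  is_hom f -> is_hom g -> is_hom (fun x => f x + g x).
Proof. by move=> hf hg x y /=; rewrite (hf x y) (hg x y) opprD addrACA. Qed.

Lemma has_card_le T (P : T -> Prop) m n (f : 'I_m -> T) (g : 'I_n -> T) :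
  injective f -> (forall i, exists j, g j = f i) -> (m <= n)%N.
Proof.
move=> fi H; have [h hh] := fin_all_exists H.
have hi : injective h by move=> i j e; apply: fi; rewrite -hh -hh e.
by have := leq_card h hi; rewrite !card_ord.
Qed.

Lemma has_card_uniq T (P : T -> Prop) m n : has_card P m -> has_card P n -> m = n.
Proof.
move=> [f [fi fP]] [g [gi gP]].
have H1 : forall i, exists j, g j = f i.
  by move=> i; apply/gP/fP; exists i.
have H2 : forall i, exists j, f j = g i.
  by move=> i; apply/fP/gP; exists i.
apply/eqP; rewrite eqn_leq (has_card_le P fi H1) (has_card_le P gi H2) //.
Qed.

Lemma pcardE T (P : T -> Prop) n : has_card P n -> pcard P = n.
Proof.
move=> H; apply: (has_card_uniq (P := P)) => //.
exact: (epsilon_spec (inhabits 0%N) (fun n => has_card P n) (ex_intro _ n H)).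
Qed.

Lemma has_card_set (F : finType) (A : {set F}) : has_card (fun x => x \in A) #|A|.
Proof.
exists (fun i => enum_val i); split; first exact: enum_val_inj.
move=> x; split; last by move=> [i <-]; exact: enum_valP.
by move=> Ax; exists (enum_rank_in Ax x); rewrite enum_rankK_in.
Qed.

Lemma has_card_transfer T U (P : T -> Prop) (Q : U -> Prop) (f : U -> T) k :
  has_card Q k -> (forall u v, Q u -> Q v -> f u = f v -> u = v) ->
  (forall x, P x <-> exists u, Q u /\ f u = x) -> has_card P k.
Proof.
move=> [g [gi gQ]] finj fP.
exists (fun i => f (g i)); split.
  move=> i j e; apply: gi; apply: finj => //; [apply/gQ; exists i | apply/gQ; exists j] => //.
move=> x; split.
  move/fP=> [u [Qu <-]]; have [i gi'] := (proj1 (gQ u) Qu); by exists i; rewrite gi'.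
by move=> [i <-]; apply/fP; exists (g i); split => //; apply/gQ; exists i.
Qed.

Definition ab (P : Prop) : bool := if excluded_middle_informative P then true else false.
Lemma abP (P : Prop) : reflect P (ab P).
Proof. by rewrite /ab; case: excluded_middle_informative => h; constructor. Qed.

Lemma has_card_enc T (x0 : T) (P : T -> Prop) (F : finType) (e : T -> F) :
  (forall x y, P x -> P y -> e x = e y -> x = y) ->
  has_card P #|[set w | ab (exists x, P x /\ e x = w)]|.
Proof.
move=> einj; set A := [set w | _].
have spec : forall w, w \in A ->
   P (epsilon (inhabits x0) (fun x => P x /\ e x = w)) /\
   e (epsilon (inhabits x0) (fun x => P x /\ e x = w)) = w.
  by move=> w; rewrite inE => /abP H; apply: (epsilon_spec (inhabits x0) _ H).
apply: (has_card_transfer (Q := fun w => w \in A)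
   (f := fun w => epsilon (inhabits x0) (fun x => P x /\ e x = w))).
- exact: has_card_set.
- move=> u v Au Av E; have [_ <-] := spec u Au; have [_ <-] := spec v Av.
  by rewrite E.
- move=> x; split.
    move=> Px; have Ax : e x \in A by rewrite inE; apply/abP; exists x.
    exists (e x); split => //; have [H1 H2] := spec _ Ax; exact: einj.
  by move=> [w [Aw <-]]; have [] := spec w Aw.
Qed.

Definition lc (Gam : zmodType) n (g : 'I_n -> Gam) (c : 'I_n -> int) : Gam :=
  \sum_(i < n) g i *~ c i.

Lemma lcB (Gam : zmodType) n (g : 'I_n -> Gam) c1 c2 :
  lc g (fun i => c1 i - c2 i) = lc g c1 - lc g c2.
Proof. by rewrite /lc -sumrB; apply: eq_bigr => i _; rewrite mulrzBr. Qed.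
Lemma lcD (Gam : zmodType) n (g : 'I_n -> Gam) c1 c2 :
  lc g (fun i => c1 i + c2 i) = lc g c1 + lc g c2.
Proof. by rewrite /lc -big_split; apply: eq_bigr => i _; rewrite mulrzDr. Qed.
Lemma lcZ (Gam : zmodType) n (g : 'I_n -> Gam) c k :
  lc g (fun i => c i * k) = lc g c *~ k.
Proof. by rewrite /lc mulrz_suml; apply: eq_bigr => i _; rewrite mulrzA. Qed.
Lemma lc0 (Gam : zmodType) n (g : 'I_n -> Gam) : lc g (fun _ => 0) = 0.
Proof. by rewrite /lc big1 // => i _; rewrite mulr0z. Qed.
Lemma lc_delta (Gam : zmodType) n (g : 'I_n -> Gam) i :
  lc g (fun k => ((k == i) : nat)%:Z) = g i.
Proof.
rewrite /lc (bigD1 i) //= eqxx mulr1z big1 ?addr0 // => k /negPf ->.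
by rewrite mulr0z.
Qed.
Lemma hom_lc (Gam G : zmodType) (phi : Gam -> G) n (g : 'I_n -> Gam) c :
  is_hom phi -> phi (lc g c) = lc (fun i => phi (g i)) c.
Proof.
move=> h; rewrite /lc (hom_sum h); apply: eq_bigr => i _; exact: homMz.
Qed.

Record satgrp (Gam : zmodType) (T : Gam -> Prop) := SatGrp {
  sg0 : T 0; sgB : forall x y, T x -> T y -> T (x - y);
  sgsat : forall x k, (0 < k)%N -> T (x *+ k) -> T x }.

Section Sat.
Variables (Gam : zmodType) (T : Gam -> Prop) (hT : satgrp T).
Lemma sgN x : T x -> T (- x).
Proof. by move=> Tx; have := sgB hT (sg0 hT) Tx; rewrite sub0r. Qed.
Lemma sgD x y : T x -> T y -> T (x + y).
Proof. by move=> Tx Ty; have := sgB hT Tx (sgN Ty); rewrite opprK. Qed.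
Lemma sgMn x n : T x -> T (x *+ n).
Proof.
move=> Tx; elim: n => [|n IH]; first by rewrite mulr0n; exact: sg0.
by rewrite mulrS; apply: sgD.
Qed.
Lemma sgMz x c : T x -> T (x *~ c).
Proof.
move=> Tx; case: c => n; first by rewrite -pmulrn; apply: sgMn.
by rewrite NegzE mulrNz; apply: sgN; rewrite -pmulrn; apply: sgMn.
Qed.
Lemma sg_sum I r (P : pred I) (F : I -> Gam) :
  (forall i, P i -> T (F i)) -> T (\sum_(i <- r | P i) F i).
Proof. by move=> H; apply: big_ind => //; [exact: sg0 | exact: sgD]. Qed.
Lemma sgMz_inv x c : c != 0 -> T (x *~ c) -> T x.
Proof.
case: c => n.
  move=> nz; rewrite -pmulrn; apply: (sgsat hT); by case: n nz.
by rewrite NegzE mulrNz => _ /sgN; rewrite opprK -pmulrn; apply: (sgsat hT).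
Qed.

Definition Good n (g : 'I_n -> Gam) := exists r (e : 'I_r -> Gam),
  (forall i, exists c, e i = lc g c) /\ (forall c, exists c', T (lc g c - lc e c')) /\
  (forall c, T (lc e c) -> forall i, c i = 0).

Lemma Good_transfer n m (g : 'I_n -> Gam) (g' : 'I_m -> Gam) :
  Good g' -> (forall c', exists c, lc g' c' = lc g c) ->
  (forall c, exists c', T (lc g c - lc g' c')) -> Good g.
Proof.
move=> [r [e [He [Hc Hi]]]] sp cov; exists r, e; split; last split => //.
  by move=> i; have [c1 ->] := He i; exact: sp.
move=> c; have [c' Tc'] := cov c; have [c'' Tc''] := Hc c'; exists c''.
have -> : lc g c - lc e c'' = (lc g c - lc g' c') + (lc g' c' - lc e c'').
  by rewrite addrA subrK.
exact: sgD.
Qed.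

Lemma Good_indep n (g : 'I_n -> Gam) :
  (forall c, T (lc g c) -> forall i, c i = 0) -> Good g.
Proof.
move=> H; exists n, g; split; last split => //.
  by move=> i; exists (fun k => ((k == i) : nat)%:Z); rewrite lc_delta.
by move=> c; exists c; rewrite subrr; exact: sg0.
Qed.

Lemma Good_drop n (g : 'I_n.+1 -> Gam) i0 :
  T (g i0) -> Good (fun k => g (lift i0 k)) -> Good g.
Proof.
move=> Tg Gd; apply: (Good_transfer Gd).
  move=> c'; exists (fun k => oapp c' 0 (unlift i0 k)).
  rewrite /lc (bigD1_ord i0) //= unlift_none mulr0z add0r.
  by apply: eq_bigr => k _; rewrite liftK.
move=> c; exists (fun k => c (lift i0 k)).
rewrite /lc (bigD1_ord i0) //= addrK; exact: sgMz.
Qed.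

Section Elem.
Variables (n : nat) (g : 'I_n -> Gam) (i j : 'I_n) (t : int) (hij : i != j).
Definition gop := fun k => if k == i then g i + g j *~ t else g k.
Definition upd (c : 'I_n -> int) := fun k => if k == j then c k + t * c i else c k.
Lemma lc_gop c : lc gop c = lc g (upd c).
Proof.
have sumd : forall (x : Gam) (l : 'I_n),
    \sum_(k < n) (if k == l then x else 0) = x.
  by move=> x l; rewrite (bigD1 l) //= eqxx big1 ?addr0 // => k /negPf ->.
have E1 : lc gop c = lc g c + g j *~ (t * c i).
  rewrite /lc /gop (eq_bigr (fun k => g k *~ c k + (if k == i then g j *~ (t * c i) else 0))).
    by rewrite big_split /= sumd.
  move=> k _; case: eqP => [->|_]; [by rewrite mulrzDl mulrzA | by rewrite addr0].
have E2 : lc g (upd c) = lc g c + g j *~ (t * c i).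
  rewrite /lc /upd (eq_bigr (fun k => g k *~ c k + (if k == j then g j *~ (t * c i) else 0))).
    by rewrite big_split /= sumd.
  move=> k _; case: eqP => [->|_]; [by rewrite mulrzDr | by rewrite addr0].
by rewrite E1 E2.
Qed.
End Elem.

Lemma Good_all n (g : 'I_n -> Gam) : Good g.
Proof.
elim: n g => [|n IHn] g; first by apply: Good_indep => c _ [].
have key : forall m (g : 'I_n.+1 -> Gam) c i0,
    (\sum_k `|c k| < m)%N -> T (lc g c) -> c i0 != 0 -> Good g.
  elim=> [|m IHm] g' c i0 //; move=> Hm Tc ci0.
  case: (boolP [exists j, (j != i0) && (c j != 0)]) => [/existsP[j /andP[ji0 cj]]|].
    have [i [k [hik [ci [ck le]]]]] : exists i k, i != k /\ c i != 0 /\ c k != 0 /\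
        (`|c i| <= `|c k|)%N.
      case: (leqP `|c i0| `|c j|) => h.
        by exists i0, j; rewrite eq_sym.
      by exists j, i0; split => //; split => //; split => //; apply: ltnW.
    set t := (c k %/ c i)%Z.
    set c' := fun l => if l == k then c l - t * c i else c l.
    have inv : forall c0, lc (gop g' i k t)
        (fun l => if l == k then c0 l - t * c0 i else c0 l) = lc g' c0.
      move=> c0; rewrite lc_gop //; apply: eq_bigr => l _; rewrite /upd.
      case: eqP => [->|_] //; rewrite (negPf hik) subrK //.
    have Ec : lc (gop g' i k t) c' = lc g' c by exact: inv.
    have Ec' : forall l, l != k -> c' l = c l by move=> l /negPf hl; rewrite /c' hl.
    have Gd : Good (gop g' i k t).
      apply: (IHm _ c' i); last by rewrite Ec' // hik.
        rewrite (bigD1 k) //= in Hm; rewrite (bigD1 k) //=.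
        have -> : (\sum_(l < n.+1 | l != k) `|c' l| = \sum_(l < n.+1 | l != k) `|c l|)%N.
          by apply: eq_bigr => l hl; rewrite Ec'.
        have : (`|c' k| < `|c k|)%N.
          rewrite /c' eqxx /t; have := divz_eq (c k) (c i); have := ltz_mod (c k) ci.
          have := modz_ge0 (c k) ci; lia.
        move=> HH; rewrite ltnS in Hm; apply: leq_trans Hm; by rewrite ltn_add2r.
      by rewrite Ec.
    apply: (Good_transfer Gd).
      by move=> c''; exists (upd i k t c''); rewrite lc_gop.
    by move=> c0; exists (fun l => if l == k then c0 l - t * c0 i else c0 l); rewrite inv subrr; exact: sg0.
  move/existsPn => H.
  have Ec : lc g' c = g' i0 *~ c i0.
    rewrite /lc (bigD1 i0) //= big1 ?addr0 // => l hl.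
    by have := H l; rewrite hl /= negbK => /eqP ->; rewrite mulr0z.
  apply: (Good_drop (i0 := i0)); last exact: IHn.
  by apply: (sgMz_inv ci0); rewrite -Ec.
case: (excluded_middle_informative (Good g)) => // nG.
apply: Good_indep => c Tc i; apply/eqP; apply/negPn/negP => ci; apply: nG.
exact: (key _ g c i (ltnSn _) Tc ci).
Qed.
End Sat.

Lemma int_dep m k (M : 'I_m -> 'I_k -> int) : (k < m)%N ->
  exists x : 'I_m -> int, (exists j, x j != 0) /\ forall i, \sum_j x j * M j i = 0.
Proof.
move=> km.
pose A : 'M[rat]_(m, k) := \matrix_(j, i) (M j i)%:~R.
have rk : (0 < \rank (kermx A))%N by rewrite mxrank_ker; have := rank_leq_col A; lia.
have nz : kermx A != 0 by rewrite -mxrank_eq0 -lt0n.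
have [j0 hj0] : exists j0, row j0 (kermx A) != 0.
  case: (excluded_middle_informative (exists j0, row j0 (kermx A) != 0)) => // H.
  case/negP: nz; apply/eqP/row_matrixP => j; rewrite row0; apply/eqP.
  by apply/negPn/negP => hj; apply: H; exists j.
set y := row j0 (kermx A).
have yA : y *m A = 0 by rewrite /y -row_mul mulmx_ker row0.
have [l hl] : exists l, y 0 l != 0.
  case: (excluded_middle_informative (exists l, y 0 l != 0)) => // H.
  case/negP: hj0; apply/eqP; apply/rowP => l; rewrite [RHS]mxE; apply/eqP.
  by apply/negPn/negP => hj; apply: H; exists l.
pose D := \prod_l denq (y 0 l).
exists (fun j => numq (y 0 j) * \prod_(l | l != j) denq (y 0 l)).
have xE : forall j, ((numq (y 0 j) * \prod_(l | l != j) denq (y 0 l))%:~R : rat)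
    = y 0 j * D%:~R.
  by move=> j; rewrite /D [in RHS](bigD1 j) //= !intrM numqE mulrA.
split.
  exists l; rewrite mulf_neq0 //; first by rewrite numq_eq0.
  by rewrite prodf_seq_neq0; apply/allP => u _; apply/implyP => _; exact: denq_neq0.
move=> i; apply: (@intr_inj rat); rewrite rmorph_sum /=.
under eq_bigr => j _ do rewrite intrM xE.
have H : (y *m A) 0 i = 0 by rewrite yA mxE.
rewrite mxE in H.
rewrite mulr0z (_ : \sum_j _ = (\sum_j y 0 j * A j i) * (D%:~R : rat)); first by rewrite H mul0r.
rewrite mulr_suml.
by apply: eq_bigr => j _; rewrite /A !mxE mulrAC.
Qed.

Section Rank.
Variable Gam : zmodType.

Lemma zindep_widen n1 n2 (h : (n1 <= n2)%N) (v : 'I_n2 -> Gam) :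
  zindep v -> zindep (fun i : 'I_n1 => v (widen_ord h i)).
Proof.
move=> Hv c Hc i.
pose c' := fun k : 'I_n2 => oapp c 0 (insub (val k) : option 'I_n1).
have c'E : forall j : 'I_n1, c' (widen_ord h j) = c j.
  by move=> j; rewrite /c' /= (valK j).
have S : \sum_(k < n2) v k *~ c' k = 0.
  rewrite (bigID (fun k : 'I_n2 => (k < n1)%N)) /= [X in _ + X]big1 ?addr0.
    rewrite (big_ord_narrow_cond (P := xpredT)) /= -[RHS]Hc.
    by apply: eq_bigr => j _; rewrite c'E.
  by move=> k hk; rewrite /c' insubF ?mulr0z //; apply/negbTE.
by rewrite -c'E; apply: Hv.
Qed.

Lemma is_rank_uniq (P : Gam -> Prop) a b : is_rank P a -> is_rank P b -> a = b.
Proof.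
have H : forall a b, is_rank P a -> is_rank P b -> ~ (a < b)%N.
  move=> a' b' [_ Ha] [[v [Pv iv]] _] lt.
  apply: (Ha (fun i => v (widen_ord lt i))) => //; exact: zindep_widen.
move=> ha hb; case: (ltngtP a b) => // h; [case: (H _ _ ha hb h) | case: (H _ _ hb ha h)].
Qed.

Lemma zrankE (P : Gam -> Prop) r : is_rank P r -> zrank P = r.
Proof.
move=> H; apply: (is_rank_uniq (P := P)) => //.
exact: (epsilon_spec (inhabits 0%N) (fun r => is_rank P r) (ex_intro _ r H)).
Qed.

Lemma rank_of (P : Gam -> Prop) rho (e : 'I_rho -> Gam) :
  (forall i, P (e i)) -> zindep e ->
  (forall x, P x -> exists k c, (0 < k)%N /\ x *+ k = lc e c) -> is_rank P rho.
Proof.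
move=> Pe ie sp; split; first by exists e.
move=> v Pv iv.
have H : forall j, exists p : nat * ('I_rho -> int), (0 < p.1)%N /\ v j *+ p.1 = lc e p.2.
  by move=> j; have [k [c [k0 E]]] := sp _ (Pv j); exists (k, c).
have [p hp] := fin_all_exists H.
have [x [[j0 xj0] xM]] := int_dep (fun j i => (p j).2 i) (ltnSn rho).
have := iv (fun j => x j * ((p j).1)%:Z).
have -> : \sum_(j < rho.+1) v j *~ (x j * ((p j).1)%:Z) = 0.
  transitivity (\sum_(j < rho.+1) \sum_(i < rho) e i *~ ((p j).2 i * x j)).
    apply: eq_bigr => j _; rewrite mulrC mulrzA -pmulrn (proj2 (hp j)).
    by rewrite /lc mulrz_suml; apply: eq_bigr => i _; rewrite mulrzA.
  rewrite exchange_big /= big1 // => i _; rewrite -mulrz_sumr.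
  by rewrite (eq_bigr (fun j => x j * (p j).2 i)) ?xM ?mulr0z // => j _; rewrite mulrC.
move=> /(_ erefl j0) /eqP; rewrite mulf_eq0 (negPf xj0) /=.
by have := proj1 (hp j0); case: ((p j0).1).
Qed.
End Rank.

Definition Sat (Gam : zmodType) (H : Gam -> Prop) (x : Gam) : Prop :=
  exists n : nat, (0 < n)%N /\ H (x *+ n).

Lemma Sat_satgrp (Gam : zmodType) (H : Gam -> Prop) :
  H 0 -> (forall x y, H x -> H y -> H (x - y)) -> (forall x k, H x -> H (x *+ k)) ->
  satgrp (Sat H).
Proof.
move=> H0 HB HM; split.
- by exists 1%N; rewrite mulr1n.
- move=> x y [n [n0 Hn]] [m [m0 Hm]]; exists (n * m)%N; split; first by rewrite muln_gt0 n0.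
  rewrite mulrnBl; apply: HB; first by rewrite mulrnA; apply: HM.
  by rewrite mulnC mulrnA; apply: HM.
- move=> x k k0 [n [n0 Hn]]; exists (k * n)%N; split; first by rewrite muln_gt0 k0.
  by rewrite mulrnA.
Qed.

Lemma split_l m n (j : 'I_m) : split (lshift n j) = inl j.
Proof. exact: (unsplitK (inl _ j)). Qed.
Lemma split_r m n (j : 'I_n) : split (rshift m j) = inr j.
Proof. exact: (unsplitK (inr _ j)). Qed.

Definition cat_fam (T : Type) m n (a : 'I_m -> T) (b : 'I_n -> T) (k : 'I_(m + n)) : T :=
  match split k with inl i => a i | inr j => b j end.

Lemma lc_cat (Gam : zmodType) m n (a : 'I_m -> Gam) (b : 'I_n -> Gam) c :
  lc (cat_fam a b) c = lc a (fun i => c (lshift n i)) + lc b (fun j => c (rshift m j)).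
Proof. by rewrite /lc big_split_ord /=; congr (_ + _); apply: eq_bigr => i _; rewrite /cat_fam ?split_l ?split_r. Qed.

Lemma lc_cat2 (Gam : zmodType) m n (a : 'I_m -> Gam) (b : 'I_n -> Gam) ca cb :
  lc (cat_fam a b) (cat_fam ca cb) = lc a ca + lc b cb.
Proof. by rewrite lc_cat /cat_fam; congr (_ + _); apply: eq_bigr => i _; rewrite ?split_l ?split_r. Qed.

Lemma lc_zero_g (Gam : zmodType) n c : lc (fun _ : 'I_n => (0 : Gam)) c = 0.
Proof. by rewrite /lc big1 // => i _; rewrite mul0rz. Qed.

Lemma lc_zero (Gam : zmodType) n (g : 'I_n -> Gam) c : (forall i, g i = 0) -> lc g c = 0.
Proof. by move=> h; rewrite /lc big1 // => i _; rewrite h mul0rz. Qed.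

Lemma lc_zeroc (Gam : zmodType) n (g : 'I_n -> Gam) c : (forall i, c i = 0) -> lc g c = 0.
Proof. by move=> h; rewrite /lc big1 // => i _; rewrite h mulr0z. Qed.

Lemma subsub (Gam : zmodType) (x a b : Gam) : (x - a) - (x - b) = b - a.
Proof. by rewrite opprB addrC addrA subrK. Qed.
Lemma sub4 (Gam : zmodType) (x y a b : Gam) : (x - y) - (a - b) = (x - a) - (y - b).
Proof. by rewrite !opprB addrACA [in RHS]addrACA [- a + _]addrC. Qed.

Section Main.
Variables (Gam : zmodType) (s : seq Gam) (hs : forall x, in_span s x)
  (A : seq Gam) (G : finZmodType).

Definition gs : 'I_(size s) -> Gam := fun i => s`_i.
Lemma gs_span x : exists c, x = lc gs c.
Proof. by have [c hc] := hs x; exists c. Qed.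

Definition enc (phi : Gam -> G) : {ffun 'I_(size s) -> G} := [ffun i : 'I_(size s) => phi (s`_i)].
Lemma enc_inj phi psi : is_hom phi -> is_hom psi -> enc phi = enc psi -> phi = psi.
Proof.
move=> hp hq e; apply: functional_extensionality => x.
have [c ->] := gs_span x; rewrite !hom_lc //; apply: eq_bigr => i _.
by move/ffunP: e => /(_ i); rewrite !ffunE => ->.
Qed.

Definition dec (w : {ffun 'I_(size s) -> G}) : Gam -> G :=
  epsilon (inhabits (fun _ => 0)) (fun phi => is_hom phi /\ enc phi = w).

Definition Hw := [set w | ab (exists phi, is_hom phi /\ enc phi = w)].

Lemma decP w : w \in Hw -> is_hom (dec w) /\ enc (dec w) = w.
Proof. by rewrite inE => /abP H; exact: (epsilon_spec _ _ H). Qed.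

Lemma dec_enc phi : is_hom phi -> dec (enc phi) = phi.
Proof.
move=> h; have Hw' : enc phi \in Hw by rewrite inE; apply/abP; exists phi.
by have [h1 h2] := decP Hw'; apply: enc_inj.
Qed.

Lemma card_enc (Q : (Gam -> G) -> Prop) : (forall phi, Q phi -> is_hom phi) ->
  pcard Q = #|[set w | ab (exists phi, Q phi /\ enc phi = w)]|.
Proof.
move=> QH; apply: pcardE; apply: (has_card_enc (fun _ => 0)) => x y Qx Qy.
by apply: enc_inj; apply: QH.
Qed.

Lemma enc_set (Q : (Gam -> G) -> Prop) (q : pred {ffun 'I_(size s) -> G}) :
  (forall phi, Q phi -> is_hom phi) ->
  (forall phi, is_hom phi -> (Q phi <-> q (enc phi))) ->
  [set w | ab (exists phi, Q phi /\ enc phi = w)] = [set w in Hw | q w].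
Proof.
move=> QH Qq; apply/setP => w; rewrite !inE; apply/abP/andP.
  move=> [phi [Qp <-]]; split; first by rewrite ?inE /Hw ?inE; apply/abP; exists phi; split => //; apply: QH.
  by apply/Qq => //; apply: QH.
move=> [Hw' qw]; have [h1 h2] : is_hom (dec w) /\ enc (dec w) = w by apply: decP; rewrite /Hw inE. exists (dec w); split => //.
by apply/Qq => //; rewrite h2.
Qed.

Section WithS.
Variable S : {set 'I_(size A)}.

Definition gH : 'I_(size A) -> Gam := fun i => if i \in S then A`_i else 0.
Lemma in_genE x : in_gen S x <-> exists c, x = lc gH c.
Proof.
have E : forall c, \sum_(i in S) A`_i *~ c i = lc gH c.
  move=> c; rewrite /lc big_mkcond /=; apply: eq_bigr => i _; rewrite /gH.
  by case: (i \in S); rewrite ?mul0rz.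
by split => [[c ->]|[c ->]]; exists c; rewrite E.
Qed.
Lemma in_gen0 : in_gen S 0.
Proof. by apply/in_genE; exists (fun _ => 0); rewrite lc0. Qed.
Lemma in_genB x y : in_gen S x -> in_gen S y -> in_gen S (x - y).
Proof.
by move=> /in_genE[c ->] /in_genE[d ->]; apply/in_genE; exists (fun i => c i - d i); rewrite lcB.
Qed.
Lemma in_genMn x k : in_gen S x -> in_gen S (x *+ k).
Proof.
by move=> /in_genE[c ->]; apply/in_genE; exists (fun i => c i * k%:Z); rewrite lcZ pmulrn.
Qed.
Lemma in_gen_lc x : in_gen S (lc gH x).
Proof. by apply/in_genE; exists x. Qed.

Lemma hTS : satgrp (tor_mod S).
Proof. exact: (Sat_satgrp in_gen0 in_genB in_genMn). Qed.

Lemma hTor : satgrp (Sat (fun x : Gam => x = 0)).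
Proof.
apply: Sat_satgrp => //; first by move=> x y -> ->; rewrite subr0.
by move=> x k ->; rewrite mul0rn.
Qed.

Lemma in_gen_tor x : in_gen S x -> tor_mod S x.
Proof. by move=> h; exists 1%N; rewrite mulr1n. Qed.

Lemma in_genD x y : in_gen S x -> in_gen S y -> in_gen S (x + y).
Proof. by move=> hx hy; have := in_genB hx (in_genB in_gen0 hy); rewrite sub0r opprK. Qed.
Lemma in_genMz x k : in_gen S x -> in_gen S (x *~ k).
Proof. by move=> /in_genE[c ->]; apply/in_genE; exists (fun i => c i * k); rewrite lcZ. Qed.
Lemma in_gen_lcv n (v : 'I_n -> Gam) c : (forall i, in_gen S (v i)) -> in_gen S (lc v c).
Proof.
move=> h; rewrite /lc; apply: (big_ind (in_gen S)); [exact: in_gen0 | exact: in_genD |].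
by move=> i _; apply: in_genMz.
Qed.

Section Count.
Variables (r : nat) (e : 'I_r -> Gam)
  (D1 : forall x, exists c, tor_mod S (x - lc e c))
  (D2 : forall c, tor_mod S (lc e c) -> forall i, c i = 0).

Definition coef (x : Gam) : 'I_r -> int :=
  epsilon (inhabits (fun _ => 0)) (fun c => tor_mod S (x - lc e c)).

Lemma coefP x : tor_mod S (x - lc e (coef x)).
Proof. exact: (epsilon_spec _ _ (D1 x)). Qed.

Lemma coef_uniq x c : tor_mod S (x - lc e c) -> coef x = c.
Proof.
move=> h; apply: functional_extensionality => i; apply/eqP; rewrite -subr_eq0; apply/eqP.
have Hd : tor_mod S (lc e (fun i => coef x i - c i)).
  by rewrite lcB -(subsub x); apply: (sgB hTS) => //; exact: coefP.
exact: (D2 Hd i).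
Qed.

Lemma coefB x y : coef (x - y) = (fun i => coef x i - coef y i).
Proof. by apply: coef_uniq; rewrite lcB sub4; apply: (sgB hTS); apply: coefP. Qed.

Lemma coefT x : tor_mod S x -> coef x = (fun _ => 0).
Proof. by move=> h; apply: coef_uniq; rewrite lc0 subr0. Qed.

Lemma coef_e j : coef (e j) = (fun k => ((k == j) : nat)%:Z).
Proof. by apply: coef_uniq; rewrite lc_delta subrr; exact: (sg0 hTS). Qed.

Definition proj x := x - lc e (coef x).
Lemma projT x : tor_mod S (proj x). Proof. exact: coefP. Qed.
Lemma projB x y : proj (x - y) = proj x - proj y.
Proof. by rewrite /proj coefB lcB sub4. Qed.
Lemma projT_id x : tor_mod S x -> proj x = x.
Proof. by move=> h; rewrite /proj coefT // lc0 subr0. Qed.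
Lemma proj_e j : proj (e j) = 0.
Proof. by rewrite /proj coef_e lc_delta subrr. Qed.
Lemma proj_decomp x : x = proj x + lc e (coef x).
Proof. by rewrite /proj subrK. Qed.

Definition ZSv (phi : Gam -> G) := is_hom phi /\ (forall x, in_gen S x -> phi x = 0).
Definition HTQ (phi : Gam -> G) := ZSv phi /\ (forall i, phi (e i) = 0).
Definition HTset := [set w | ab (exists phi, HTQ phi /\ enc phi = w)].
Definition res (phi : Gam -> G) (x : Gam) : G := if ab (tor_mod S x) then phi x else 0.

Lemma hom_proj (phi : Gam -> G) : is_hom phi -> is_hom (fun x => phi (proj x)).
Proof. by move=> h x y /=; rewrite projB h. Qed.

Lemma hom_proj_eq (phi : Gam -> G) x : is_hom phi -> (forall i, phi (e i) = 0) ->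
  phi x = phi (proj x).
Proof. by move=> h z; rewrite /proj (h x) hom_lc // lc_zero // subr0. Qed.

Lemma HTQ_proj phi : ZSv phi -> HTQ (fun x => phi (proj x)).
Proof.
move=> [h z]; split; first split.
- exact: hom_proj.
- by move=> x hx /=; rewrite projT_id; [exact: z | exact: in_gen_tor].
- by move=> i /=; rewrite proj_e hom0.
Qed.

Lemma mSG_E : mSG S G = #|HTset|.
Proof.
rewrite /mSG; apply: pcardE.
apply: (has_card_transfer (Q := HTQ) (f := res)).
- apply: (has_card_enc (fun _ => 0)) => x y [[hx _] _] [[hy _] _]; exact: enc_inj.
- move=> u v [[hu zu] eu] [[hv zv] ev] E; apply: functional_extensionality => x.
  rewrite (hom_proj_eq x hu eu) (hom_proj_eq x hv ev).
  have := congr1 (fun f => f (proj x)) E; rewrite /res.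
  by case: abP => // /(_ (projT x)).
- move=> psi; split.
  + move=> [hadd [hz hout]]; exists (fun x => psi (proj x)); split.
      split; first split.
      * by move=> x y /=; rewrite projB; apply: hadd; apply: projT.
      * by move=> x hx /=; rewrite projT_id; [exact: hz | exact: in_gen_tor].
      * by move=> i /=; rewrite proj_e; apply: hz; exact: in_gen0.
    apply: functional_extensionality => x; rewrite /res; case: abP => Tx.
      by rewrite projT_id.
    by rewrite hout.
  + move=> [phi [[[h z] _] <-]]; split; last split.
    * move=> x y Tx Ty; rewrite /res; case: abP => [_|]; last by move=> []; apply: (sgB hTS).
      by case: abP => // _; case: abP => // _; apply: h.
    * by move=> x hx; rewrite /res; case: abP => // _; apply: z.
    * by move=> x nT; rewrite /res; case: abP.
Qed.
Lemma HTdec w : w \in HTset -> HTQ (dec w) /\ enc (dec w) = w.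
Proof.
rewrite /HTset inE => /abP [phi [Hp <-]].
by have [[hp _] _] := Hp; rewrite dec_enc.
Qed.

Lemma ZSv_card : has_card ZSv (#|HTset| * #|G| ^ r)%N.
Proof.
pose f := fun p : {ffun 'I_(size s) -> G} * {ffun 'I_r -> G} =>
  fun x => dec p.1 x + lc (fun i => p.2 i) (coef x).
have -> : (#|HTset| * #|G| ^ r)%N = #|setX HTset [set: {ffun 'I_r -> G}]|.
  by rewrite cardsX cardsT card_ffun card_ord.
apply: (has_card_transfer (Q := fun p => p \in setX HTset [set: {ffun 'I_r -> G}]) (f := f)).
- exact: has_card_set.
- move=> [w g] [w' g'] /setXP [Hw1 _] /setXP [Hw2 _] /= E.
  have [[[h1 z1] e1] en1] := HTdec Hw1; have [[[h2 z2] e2] en2] := HTdec Hw2.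
  have gE : g = g'.
    apply/ffunP => j; have := congr1 (fun F => F (e j)) E; rewrite /f /= e1 e2 coef_e.
    by rewrite !lc_delta !add0r.
  subst g'; have dE : dec w = dec w'.
    apply: functional_extensionality => x; have := congr1 (fun F => F x) E; rewrite /f /=.
    exact: addIr.
  by rewrite -en1 -en2 dE.
- move=> phi; split.
  + move=> [hp zp]; exists (enc (fun x => phi (proj x)), [ffun i => phi (e i)]); split.
      apply/setXP; split; last by rewrite inE.
      rewrite /HTset inE; apply/abP; exists (fun x => phi (proj x)); split => //.
      exact: HTQ_proj.
    rewrite /f /= dec_enc; last exact: hom_proj.
    apply: functional_extensionality => x /=.
    have -> : lc (fun i => [ffun i => phi (e i)] i) (coef x) = phi (lc e (coef x)).
      by rewrite hom_lc //; apply: eq_bigr => i _; rewrite ffunE.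
    by rewrite -(homD hp) -proj_decomp.
  + move=> [[w g] [/setXP [H _] <-]]; have [[[h z] _] _] := HTdec H.
    split.
    * move=> x y; rewrite /f /= (h x y) coefB lcB opprD addrACA //.
    * move=> x hx; rewrite /f /= z // coefT ?lc0 ?addr0 //; exact: in_gen_tor.
Qed.
Lemma tor_mulr (x : Gam) : Sat (fun x : Gam => x = 0) x ->
  exists k, (0 < k)%N /\ x *+ k = 0.
Proof. by []. Qed.

Lemma ranks : exists rH, rankS S = rH /\ rankG Gam = (rH + r)%N.
Proof.
have [rH [eH [He [Hc Hi]]]] := Good_all hTor gH.
have eHin : forall i, in_gen S (eH i).
  by move=> i; have [c ->] := He i; exact: in_gen_lc.
have eHind : zindep eH.
  by move=> c Hc0; apply: Hi; rewrite /lc Hc0; exact: (sg0 hTor).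
have spanH : forall x, in_gen S x -> exists k c, (0 < k)%N /\ x *+ k = lc eH c.
  move=> x /in_genE [c ->]; have [c' [k [k0 Hk]]] := Hc c.
  exists k, (fun i => c' i * k%:Z); split => //.
  by rewrite lcZ pmulrn; apply/eqP; rewrite -subr_eq0 -mulrnBl Hk.
exists rH; split.
  by apply: zrankE; apply: (rank_of eHin eHind spanH).
apply: zrankE; apply: (rank_of (e := cat_fam eH e)) => //.
  move=> c Hc0.
  have E0 : lc eH (fun i => c (lshift r i)) + lc e (fun j => c (rshift rH j)) = 0.
    by rewrite -lc_cat.
  have Ht : tor_mod S (lc e (fun j => c (rshift rH j))).
    apply: in_gen_tor.
    have -> : lc e (fun j => c (rshift rH j)) = 0 - lc eH (fun i => c (lshift r i)).
      by rewrite -E0 addrC addKr.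
    by apply: in_genB; [exact: in_gen0 | exact: in_gen_lcv].
  have cr := D2 Ht.
  have El : lc eH (fun i => c (lshift r i)) = 0.
    by rewrite -E0 (lc_zeroc _ cr) addr0.
  have cl : forall i, c (lshift r i) = 0.
    by apply: Hi; rewrite El; exact: (sg0 hTor).
  by move=> k; case: (split_ordP k) => j ->; [exact: cl | exact: cr].
move=> x _; have [b Tb] := D1 x; have [n [n0 Hn]] := Tb.
have [c Ec] := (proj1 (in_genE _)) Hn; have [c' [m [m0 Hm]]] := Hc c.
exists (n * m)%N, (cat_fam (fun i => c' i * m%:Z) (fun j => b j * (n * m)%N%:Z)).
split; first by rewrite muln_gt0 n0.
rewrite lc_cat2 !lcZ -!pmulrn.
have E1 : (x - lc e b) *+ (n * m) = lc eH c' *+ m.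
  by rewrite mulrnA Ec; apply/eqP; rewrite -subr_eq0 -mulrnBl Hm.
by rewrite -E1 mulrnBl subrK.
Qed.
End Count.
Definition ZS (phi : Gam -> G) := is_hom phi /\ (forall i, i \in S -> phi (A`_i) = 0).

Lemma ZS_ZSv phi : ZS phi <-> ZSv phi.
Proof.
split.
  move=> [h z]; split => // x [c ->]; rewrite (hom_sum h) big1 // => i iS.
  by rewrite homMz // z // mul0rz.
move=> [h z]; split => // i iS; apply: z; exists (fun k => ((k == i) : nat)%:Z).
by rewrite (bigD1 i) //= eqxx mulr1z big1 ?addr0 // => k /andP [_ /negPf ->]; rewrite mulr0z.
Qed.

Lemma count_S : pcard ZS = (mSG S G * #|G| ^ (rankG Gam - rankS S))%N.
Proof.
have [r [e [_ [Hc Hi]]]] := Good_all hTS gs.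
have D1 : forall x, exists c, tor_mod S (x - lc e c).
  by move=> x; have [c ->] := gs_span x; exact: Hc.
have [rH [-> ->]] := ranks D1 Hi.
rewrite addKn (mSG_E D1 Hi); apply: pcardE.
apply: (has_card_transfer (Q := ZSv) (f := id)).
- exact: ZSv_card.
- by [].
- by move=> phi; split => [/ZS_ZSv h|[psi [h <-]]]; [exists phi | apply/ZS_ZSv; exact: h].
Qed.
End WithS.
End Main.

Lemma prod_bool (I : finType) (J : pred I) (b : I -> bool) :
  \prod_(i in J) ((b i : nat)%:Z) = (([forall i in J, b i] : bool) : nat)%:Z.
Proof.
case: (boolP [forall i in J, b i]) => h.
  by rewrite big1 // => i iJ; have := forall_inP h i iJ; case: (b i).
have [i iJ nb] : exists2 i, i \in J & ~~ b i.
  by move: h; rewrite negb_forall_in => /exists_inP [i iJ nb]; exists i.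
by rewrite (bigD1 i) //= (negPf nb) mul0r.
Qed.

Lemma incl_excl (F I : finType) (B : {set F}) (Pr : I -> F -> bool) :
  (#|[set w in B | [forall i, ~~ Pr i w]]| : int) =
  \sum_(J : {set I}) (-1) ^+ #|J| * (#|[set w in B | [forall i in J, Pr i w]]| : int).
Proof.
have cE : forall p : pred F, (#|[set w in B | p w]| : int) = \sum_(w in B) ((p w : nat) : int).
  move=> p; rewrite -sum1_card (big_morph Posz PoszD (erefl (Posz 0))) big_mkcond /=.
  rewrite [RHS]big_mkcond /=; apply: eq_bigr => w _; rewrite !inE.
  by case: (w \in B); case: (p w).
under eq_bigr => J _ do rewrite (cE (fun w => [forall i in J, Pr i w])) big_distrr /=.
rewrite cE exchange_big /=; apply: eq_bigr => w _.
have -> : (([forall i, ~~ Pr i w] : bool) : nat)%:Z = \prod_i (- ((Pr i w : nat) : int) + 1).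
  rewrite -(prod_bool xpredT (fun i => ~~ Pr i w)) /=.
  by apply: eq_bigr => i _; case: (Pr i w).
rewrite bigA_distr; apply: eq_bigr => J _.
rewrite -big_mkcond /= prodrN prod_bool.
by [].
Qed.

Lemma PoszX' n k : ((n ^ k)%N : int) = (n : int) ^+ k.
Proof. by elim: k => [|k IH]; rewrite ?expn0 ?expr0 // expnS exprS PoszM IH. Qed.

Unset Implicit Arguments. Set Strict Implicit.

Theorem mainTheorem10 (Gam : zmodType) (hfg : fin_gen Gam) (A : seq Gam)
    (G : finZmodType) :
  (pcard (@Mset Gam A G))%:Z = chiA A G (#|G|%:Z).
Proof.
have [s hs] := hfg.
pose Pr := fun (i : 'I_(size A)) (w : {ffun 'I_(size s) -> G}) => @dec _ s G w (A`_i) == 0.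
have hM : forall phi, @Mset Gam A G phi -> is_hom phi by move=> phi [].
rewrite (card_enc hs hM).
rewrite (enc_set (q := fun w => [forall i, ~~ Pr i w])) //; last first.
  move=> phi hp; rewrite /Pr; split.
    move=> [_ nz]; apply/forallP => i; rewrite dec_enc //; apply: nz; exact: mem_nth.
  move/forallP => H; split => // a /(nthP 0) [i hi <-].
  by have := H (Ordinal hi); rewrite dec_enc.
rewrite incl_excl /chiA; apply: eq_bigr => S _.
have E : [set w in Hw s G | [forall i in S, Pr i w]] =
    [set w | ab (exists phi, @ZS Gam A G S phi /\ enc s phi = w)].
  symmetry; apply: enc_set; first by move=> phi [].
  move=> phi hp; rewrite /Pr; split.
    move=> [_ z]; apply/forall_inP => i iS; rewrite dec_enc //; apply/eqP; exact: z.
  move/forall_inP => H; split => // i iS; apply/eqP.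
  by have := H i iS; rewrite dec_enc.
rewrite E -(card_enc hs); last by move=> phi [].
by rewrite (count_S hs) PoszM PoszX' mulrA.
Qed.
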